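(* Let $P$ be a finitely generated abelian group and $A\subset P$ a subgroup. For subgroups $B,B'$ with $A\subset B\subset P$ and $A\subset B'\subset P$, say that $B$ and $B'$ are equivalent if there is an isomorphism $B\to B'$ which restricts to the identity on $A$. Then there are only finitely many equivalence classes. *)

(* Defs.v *)
From mathcomp Require Import all_boot all_order all_algebra.
Set Implicit Arguments. Unset Strict Implicit. Unset Printing Implicit Defensive.
Import GRing.Theory.
Local Open Scope ring_scope.

Definition fin_gen (P : zmodType) : Prop :=
  exists n : nat, exists g : 'I_n -> P,
    forall x : P, exists c : 'I_n -> int, x = \sum_(i < n) g i *~ c i.

Definition is_subgroup (P : zmodType) (B : P -> Prop) : Prop :=
  B 0 /\ (forall x y, B x -> B y -> B (x - y)).

Definition subset_of (P : Type) (A B : P -> Prop) : Prop :=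
  forall x, A x -> B x.

(* The isomorphism is represented
   by a function f : P -> P whose restriction to B is a bijective group
   homomorphism onto B' (values outside B are irrelevant). *)
Definition equiv_over (P : zmodType) (A B B' : P -> Prop) : Prop :=
  exists f : P -> P,
    (forall x, B x -> B' (f x)) /\
    (forall x y, B x -> B y -> f (x + y) = f x + f y) /\
    (forall x y, B x -> B y -> f x = f y -> x = y) /\
    (forall y, B' y -> exists2 x, B x & f x = y) /\
    (forall a, A a -> f a = a).

(* Main.v *)
Require Import Defs.
From mathcomp Require Import all_boot all_order all_algebra.
From Stdlib Require Import ClassicalEpsilon Classical.
Set Implicit Arguments. Unset Strict Implicit. Unset Printing Implicit Defensive.
Import Order.TTheory GRing.Theory Num.Theory.
Local Open Scope ring_scope.

Section Sub.
Variable P : zmodType.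
Variable B : P -> Prop.
Hypothesis hB : is_subgroup B.

Lemma sg0 : B 0. Proof. by case: hB. Qed.
Lemma sgB x y : B x -> B y -> B (x - y). Proof. by case: hB => _; apply. Qed.
Lemma sgN x : B x -> B (- x).
Proof. by move=> Hx; rewrite -sub0r; apply: sgB => //; apply: sg0. Qed.
Lemma sgD x y : B x -> B y -> B (x + y).
Proof. by move=> Hx Hy; rewrite -[y]opprK; apply: sgB => //; apply: sgN. Qed.
Lemma sgMn x m : B x -> B (x *+ m).
Proof. move=> Hx; elim: m => [|m IH]; first by rewrite mulr0n; apply: sg0.
by rewrite mulrS; apply: sgD. Qed.
Lemma sgMz x z : B x -> B (x *~ z).
Proof. move=> Hx; case: z => m; first by apply: sgMn.
by rewrite NegzE mulrNz; apply: sgN; apply: sgMn. Qed.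
Lemma sgsum (I : Type) (r : seq I) (F : I -> P) :
  (forall i, B (F i)) -> B (\sum_(i <- r) F i).
Proof. move=> HF; elim: r => [|a r IH]; first by rewrite big_nil; apply: sg0.
by rewrite big_cons; apply: sgD. Qed.
Lemma sgsumo (s : nat) (F : nat -> P) :
  (forall i, (i < s)%N -> B (F i)) -> B (\sum_(i < s) F i).
Proof. move=> HF; apply: (big_ind B); [exact: sg0 | exact: sgD | ].
by move=> i _; apply: HF. Qed.
End Sub.

Definition pb (Q : Prop) : bool :=
  if excluded_middle_informative Q then true else false.
Lemma pbP (Q : Prop) : pb Q <-> Q.
Proof. by rewrite /pb; case: excluded_middle_informative. Qed.

Lemma finite_classes (T : Type) (KT : finType) (Good : T -> Prop)
  (Rl : T -> T -> Prop) (Inv : T -> KT -> Prop) (t0 : T) :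
  Good t0 ->
  (forall B, Good B -> exists k, Inv B k) ->
  (forall B B' k, Good B -> Good B' -> Inv B k -> Inv B' k -> Rl B B') ->
  exists N : nat, exists C : 'I_N -> T,
    (forall i, Good (C i)) /\ (forall B, Good B -> exists i, Rl B (C i)).
Proof.
move=> G0 Hex Hrel.
pose C (i : 'I_#|KT|) : T :=
  match excluded_middle_informative (exists B, Good B /\ Inv B (enum_val i)) with
  | left H => proj1_sig (constructive_indefinite_description _ H)
  | right _ => t0 end.
have HC i : (exists B, Good B /\ Inv B (enum_val i)) -> Good (C i) /\ Inv (C i) (enum_val i).
  rewrite /C; case: excluded_middle_informative => // H _.
  by case: (constructive_indefinite_description _ H).
exists #|KT|, C; split.
  move=> i; rewrite /C; case: excluded_middle_informative => // H.
  by case: (constructive_indefinite_description _ H) => x [].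
move=> B GB; have [k Hk] := Hex B GB.
exists (enum_rank k).
have [] := HC (enum_rank k); first by exists B; rewrite enum_rankK.
rewrite enum_rankK => G1 I1.
exact: (Hrel B _ k).
Qed.

Lemma scale_intE n (z : int) (v : 'rV[int]_n) : z *: v = v *~ z.
Proof. by rewrite -scaler_int intz. Qed.

Lemma int_cyclic (I : int -> Prop) : is_subgroup I -> (exists t, I t /\ t != 0) ->
  exists b : int, 0 < b /\ I b /\ forall t, I t -> exists q, t = q * b.
Proof.
move=> hI [t [It tn0]].
have Iabs : I (`|t|%N%:Z).
  case: (ger0P t) => [/gez0_abs -> // | /ltz0_abs ->]; exact: sgN.
pose p := fun m : nat => pb ((0 < m)%N /\ I m%:Z).
have exP : exists m, p m.
  exists `|t|%N; apply/pbP; split => //; by rewrite absz_gt0.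
case: (ex_minnP exP) => m /pbP [m0 Im] mmin.
exists m%:Z; split; first by rewrite ltz_nat.
split => // u Iu.
exists (u %/ m)%Z.
have mn0 : (m%:Z != 0) by rewrite eqz_nat -lt0n.
have Ir : I (u %% m)%Z.
  have -> : (u %% m)%Z = u - (u %/ m)%Z * m.
    by rewrite {2}(divz_eq u m) addrC addKr.
  apply: sgB => //; rewrite mulrC -mulrzz; exact: sgMz.
have r0 : (u %% m)%Z = 0.
  apply/eqP; apply/negPn/negP => rn0.
  have rge := modz_ge0 u mn0.
  have rlt := ltz_mod u mn0.
  have : (m <= `|(u %% m)%Z|%N)%N.
    apply: mmin; apply/pbP; split; first by rewrite absz_gt0.
    by rewrite gez0_abs.
  by rewrite -lez_nat gez0_abs // real_leNgt ?rlt ?num_real. 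
by rewrite {1}(divz_eq u m) r0 addr0.
Qed.

Definition indep n (s : nat) (c : nat -> 'rV[int]_n) :=
  forall k : nat -> int, \sum_(i < s) k i *: c i = 0 -> forall i, (i < s)%N -> k i = 0.

Lemma F1 n (j : nat) (G : 'rV[int]_n -> Prop) : is_subgroup G ->
  (forall x, G x -> forall i : 'I_n, (j <= i)%N -> x 0 i = 0) ->
  exists s (c : nat -> 'rV[int]_n), (s <= j)%N /\ (forall i, (i < s)%N -> G (c i)) /\
    indep s c /\ forall x, G x -> exists k : nat -> int, x = \sum_(i < s) k i *: c i.
Proof.
elim: j G => [|j IH] G hG hz.
  exists 0%N, (fun _ => 0); split => //; split => //; split.
    by move=> k _ i.
  move=> x Gx; exists (fun _ => 0); rewrite big_ord0.
  by apply/matrixP => a b; rewrite (ord1 a) mxE hz.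
case: (leqP n j) => [nj | jn].
  have hz' : forall x, G x -> forall i : 'I_n, (j <= i)%N -> x 0 i = 0.
    move=> x Gx i ji; have := leq_trans (ltn_ord i) nj.
    by rewrite ltnNge ji.
  have [s [c [sj [Gc [ic gc]]]]] := IH G hG hz'.
  by exists s, c; split => //; apply: leqW.
pose oj := Ordinal jn.
pose G0 := fun x => G x /\ x 0 oj = 0.
have hG0 : is_subgroup G0.
  split; first by split; [exact: sg0 | rewrite mxE].
  move=> x y [Gx x0] [Gy y0]; split; first exact: sgB.
  by rewrite !mxE x0 y0 subr0.
have hz0 : forall x, G0 x -> forall i : 'I_n, (j <= i)%N -> x 0 i = 0.
  move=> x [Gx x0] i; rewrite leq_eqVlt => /orP [/eqP ji | ji].
    by have -> : i = oj by apply/val_inj.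
  exact: hz.
have [s [c [sj [Gc [ic gc]]]]] := IH G0 hG0 hz0.
pose I := fun t : int => exists x, G x /\ x 0 oj = t.
have hI : is_subgroup I.
  split; first by exists 0; split; [exact: sg0 | rewrite mxE].
  move=> _ _ [x [Gx <-]] [y [Gy <-]]; exists (x - y); split; first exact: sgB.
  by rewrite !mxE.
case: (classic (exists t, I t /\ t != 0)) => [nz | z].
  have [b [b0 [[beta [Gbeta betab]] bdiv]]] := int_cyclic hI nz.
  pose c' := fun i => if i == s then beta else c i.
  exists s.+1, c'; split => //; split.
    move=> i; rewrite ltnS leq_eqVlt /c' => /orP [/eqP -> | lt]; first by rewrite eqxx.
    by rewrite ifN ?(ltn_eqF lt) //; case: (Gc i lt).
  split.
    move=> k; rewrite big_ord_recr /= {2}/c' eqxx.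
    rewrite (eq_bigr (fun i : 'I_s => k i *: c i)); last first.
      by move=> i _; rewrite /c' ifN // ltn_eqF.
    move=> hsum.
    have ks : k s = 0.
      have := congr1 (fun M : 'rV[int]_n => M 0 oj) hsum.
      rewrite /= !mxE summxE big1; last first.
        by move=> i _; rewrite mxE; case: (Gc i (ltn_ord i)) => _ ->; rewrite mulr0.
      rewrite add0r betab => /eqP; rewrite mulf_eq0 => /orP [/eqP // | bz].
      by move: b0; rewrite (eqP bz) Order.POrderTheory.ltxx.
    move: hsum; rewrite ks scale0r addr0 => hsum.
    move=> i; rewrite ltnS leq_eqVlt => /orP [/eqP -> // | lt].
    exact: ic hsum i lt.
  move=> x Gx.
  have [q xq] := bdiv (x 0 oj) (ex_intro _ x (conj Gx erefl)).
  have G0y : G0 (x - q *: beta).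
    split; first by apply: sgB => //; rewrite scale_intE; exact: sgMz.
    by rewrite !mxE betab xq subrr.
  have [k xk] := gc _ G0y.
  exists (fun i => if i == s then q else k i).
  rewrite big_ord_recr /= eqxx {2}/c' eqxx.
  rewrite (eq_bigr (fun i : 'I_s => k i *: c i)); last first.
    by move=> i _; rewrite /c' ifN // ltn_eqF.
  by rewrite -xk subrK.
have G0G : forall x, G x -> G0 x.
  move=> x Gx; split => //; apply/eqP/negPn/negP => xn0.
  by apply: z; exists (x 0 oj); split => //; exists x.
exists s, c; split; first exact: leqW.
split; first by move=> i /Gc [].
by split => // x /G0G; apply: gc.
Qed.

Lemma denom_clear m p (M : 'M[rat]_(m,p)) :
  exists e : int, 0 < e /\ exists Mz : 'M[int]_(m,p), map_mx intr Mz = e%:~R *: M.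
Proof.
pose e := \prod_(k : 'I_m * 'I_p) denq (M k.1 k.2).
exists e; split; first by apply: prodr_gt0 => k _; exact: denq_gt0.
pose rest (i : 'I_m) (j : 'I_p) := \prod_(k : 'I_m * 'I_p | k != (i, j)) denq (M k.1 k.2).
exists (\matrix_(i, j) (numq (M i j) * rest i j)).
apply/matrixP => i j; rewrite !mxE intrM numqE /e (bigD1 (i, j)) //= intrM.
rewrite -/(rest i j); set r := (rest i j)%:~R; set d := (denq _)%:~R.
by rewrite [RHS]mulrC mulrA.
Qed.

Lemma zmod_shuffle (Z : zmodType) (x y a c b d : Z) :
  x + y - (a + c) + (b + d) = (x - a + b) + (y - c + d).
Proof.
by rewrite opprD [x + y + _]addrACA [_ + (b + d)]addrACA.
Qed.

Section Iso.
Variable n : nat.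
Local Notation V := 'rV[int]_n.
Variable L : 'M[int]_n.
Variable s : nat.

Definition S (k : nat -> int) (v : nat -> V) := \sum_(i < s) k i *: v i.

Lemma S_eq k1 k2 v : (forall i, (i < s)%N -> k1 i = k2 i) -> S k1 v = S k2 v.
Proof. by move=> h; apply: eq_bigr => i _; rewrite h. Qed.

Lemma S_add k1 k2 v : S (fun i => k1 i + k2 i) v = S k1 v + S k2 v.
Proof. by rewrite /S -big_split; apply: eq_bigr => i _; rewrite scalerDl. Qed.

Lemma S_uniq c k1 k2 : indep s c -> S k1 c = S k2 c ->
  forall i, (i < s)%N -> k1 i = k2 i.
Proof.
move=> ic h i lt; apply/eqP; rewrite -subr_eq0; apply/eqP.
apply: (ic (fun i => k1 i - k2 i)) => //.
rewrite (eq_bigr (fun i : 'I_s => k1 i *: c i - k2 i *: c i)); last first.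
  by move=> j _; rewrite scalerBl.
by rewrite sumrB; apply/eqP; rewrite subr_eq0; apply/eqP.
Qed.

Lemma S_L k b c : (forall i, (i < s)%N -> b i *m L = c i) -> S k b *m L = S k c.
Proof.
move=> h; rewrite /S mulmx_suml; apply: eq_bigr => i _.
by rewrite -scalemxAl h.
Qed.

Lemma S_in (B : V -> Prop) k b : is_subgroup B -> (forall i, (i < s)%N -> B (b i)) -> B (S k b).
Proof.
move=> hB hb; rewrite /S; apply: (@sgsumo _ B hB s (fun i => k i *: b i)) => i lt.
rewrite scale_intE; apply: sgMz => //.
exact: hb.
Qed.

Lemma S_zero k v : (forall i, (i < s)%N -> k i = 0) -> S k v = 0.
Proof. by move=> h; apply: big1 => i _; rewrite h ?scale0r. Qed.

Lemma iso_build (A B B' : V -> Prop) (c c' b b' : nat -> V) (k k' : V -> nat -> int) :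
  is_subgroup B -> is_subgroup B' ->
  (forall a, A a -> B a) ->
  (forall a, A a -> a *m L = 0) ->
  (forall x, x *m L = 0 -> (B x <-> B' x)) ->
  (forall i, (i < s)%N -> B (b i)) -> (forall i, (i < s)%N -> B' (b' i)) ->
  (forall i, (i < s)%N -> b i *m L = c i) -> (forall i, (i < s)%N -> b' i *m L = c' i) ->
  indep s c -> indep s c' ->
  (forall x, B x -> x *m L = S (k x) c) ->
  (forall x, B' x -> x *m L = S (k' x) c') ->
  equiv_over A B B'.
Proof.
move=> hB hB' AB AL KBB' Bb Bb' bc bc' ic ic' kB kB'.
pose f x := x - S (k x) b + S (k x) b'.
have L1 x : B x -> (x - S (k x) b) *m L = 0.
  by move=> Bx; rewrite mulmxBl (S_L _ bc) kB // subrr.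
have L1' y : B' y -> (y - S (k' y) b') *m L = 0.
  by move=> By; rewrite mulmxBl (S_L _ bc') kB' // subrr.
have fB x : B x -> B' (f x).
  move=> Bx; apply: sgD => //; last exact: S_in.
  by apply/(KBB' _ (L1 x Bx)); apply: sgB => //; exact: S_in.
have fL x : B x -> f x *m L = S (k x) c'.
  by move=> Bx; rewrite /f mulmxDl L1 // add0r (S_L _ bc').
exists f; split => //; split.
  move=> x y Bx By.
  have kxy : forall i, (i < s)%N -> k (x + y) i = k x i + k y i.
    apply: (S_uniq ic); rewrite S_add -!kB //; last exact: sgD.
    by rewrite mulmxDl.
  rewrite /f (S_eq b kxy) (S_eq b' kxy) !S_add.
  exact: zmod_shuffle.
split.
  move=> x y Bx By fxy.
  have kk : forall i, (i < s)%N -> k x i = k y i.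
    by apply: (S_uniq ic'); rewrite -!fL // fxy.
  move: fxy; rewrite /f (S_eq b kk) (S_eq b' kk).
  by move/(addIr _)/(addIr _).
split.
  move=> y By.
  pose x := y - S (k' y) b' + S (k' y) b.
  have Bx : B x.
    apply: sgD => //; last exact: S_in.
    by apply/(KBB' _ (L1' y By)); apply: sgB => //; exact: S_in.
  exists x => //.
  have kk : forall i, (i < s)%N -> k x i = k' y i.
    apply: (S_uniq ic); rewrite -kB // /x mulmxDl L1' // add0r (S_L _ bc) //.
  by rewrite /f (S_eq b kk) (S_eq b' kk) /x addrK subrK.
move=> a Aa.
have kk : forall i, (i < s)%N -> k a i = (fun _ => 0) i.
  apply: (S_uniq ic); rewrite -kB; last exact: AB.
  by rewrite AL // /S big1 // => i _; rewrite scale0r.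
by rewrite /f (S_zero b kk) (S_zero b' kk) subr0 addr0.
Qed.
End Iso.

Lemma map_intr_inj m p (M1 M2 : 'M[int]_(m, p)) :
  map_mx intr M1 = map_mx intr M2 :> 'M[rat]_(m, p) -> M1 = M2.
Proof.
move=> h; apply/matrixP => i j; have := congr1 (fun M : 'M[rat]_(m, p) => M i j) h.
by rewrite !mxE => /intr_inj.
Qed.

Lemma resid (d t : int) : 0 < d ->
  (`|(t %% d)%Z|%N < `|d|%N)%N /\ t = (t %/ d)%Z * d + (`|(t %% d)%Z|%N)%:Z.
Proof.
move=> d0; have dn0 : d != 0 by rewrite gt_eqF.
have rge := modz_ge0 t dn0.
split; last by rewrite gez0_abs // -divz_eq.
rewrite -ltz_nat (gez0_abs rge) (gez0_abs (ltW d0)).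
by have := ltz_mod t dn0; rewrite gtr0_norm.
Qed.

Lemma sgScale n (B : 'rV[int]_n -> Prop) (z : int) v : is_subgroup B -> B v -> B (z *: v).
Proof. by move=> hB Bv; rewrite scale_intE; apply: sgMz. Qed.

Lemma ex_fun (X Y : Type) (y0 : Y) (R : X -> Y -> Prop) :
  (forall x, exists y, R x y) -> exists f : X -> Y, forall x, R x (f x).
Proof.
move=> h; exists (fun x => proj1_sig (constructive_indefinite_description _ (h x))).
by move=> x; case: (constructive_indefinite_description _ (h x)).
Qed.

Theorem mainV n (A : 'rV[int]_n -> Prop) : is_subgroup A ->
  exists N : nat, exists C : 'I_N -> ('rV[int]_n -> Prop),
    (forall i, is_subgroup (C i) /\ subset_of A (C i)) /\
    (forall B, is_subgroup B -> subset_of A B -> exists i : 'I_N, equiv_over A B (C i)).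
Proof.
move=> hA.
have vac : forall (G : 'rV[int]_n -> Prop) x, G x -> forall i : 'I_n, (n <= i)%N -> x 0 i = 0.
  by move=> G x _ i; rewrite leqNgt ltn_ord.
have [sa [a [_ [Aa [_ ga]]]]] := F1 hA (vac A).
pose Amat : 'M[int]_(sa, n) := \matrix_(i < sa) a i.
pose AQ : 'M[rat]_(sa, n) := map_mx intr Amat.
have [eL [eL0 [L hL]]] := denom_clear (cokermx AQ).
have [d [d0 [Pz hP]]] := denom_clear (pinvmx AQ).
have comb : forall u : 'rV[int]_sa, A (u *m Amat).
  move=> u; rewrite mulmx_sum_row; apply: (big_ind A); [exact: sg0 | exact: sgD |].
  by move=> i _; rewrite rowK; apply: sgScale => //; apply: Aa.
have AK : forall x, A x -> x *m L = 0.
  move=> x Ax; have [k xk] := ga x Ax.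
  have xu : x = (\row_(i < sa) k i) *m Amat.
    rewrite xk mulmx_sum_row; apply: eq_bigr => i _; by rewrite rowK mxE.
  apply: map_intr_inj; rewrite (map_mx0 (intr : {rmorphism int -> rat})) map_mxM hL -scalemxAr.
  have : (map_mx intr x <= AQ)%MS by rewrite xu map_mxM submxMl.
  by rewrite submxE => /eqP ->; rewrite scaler0.
have KA : forall x, x *m L = 0 -> A (d *: x).
  move=> x xL.
  have h1 : map_mx intr x *m cokermx AQ = 0.
    have := congr1 (fun M : 'rV[int]_n => map_mx intr M : 'rV[rat]_n) xL; rewrite (map_mx0 (intr : {rmorphism int -> rat})) map_mxM hL -scalemxAr.
    move/eqP; rewrite scaler_eq0 intr_eq0 (negbTE (lt0r_neq0 eL0)) /= => /eqP //.
  have h2 : (map_mx intr x <= AQ)%MS by rewrite submxE h1.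
  have -> : d *: x = (x *m Pz) *m Amat.
    apply: map_intr_inj; rewrite map_mxZ !map_mxM hP -/AQ.
    by rewrite -scalemxAr -scalemxAl mulmxKpV.
  exact: comb.
pose K := fun x : 'rV[int]_n => x *m L = 0.
have hK : is_subgroup K.
  by split; [rewrite /K mul0mx | move=> x y; rewrite /K mulmxBl => -> ->; rewrite subrr].
have [sk [e [_ [Ke [_ ge]]]]] := F1 hK (vac K).
pose D := `|d|%N.
pose vec (r : {ffun 'I_sk -> 'I_D}) := \sum_(i < sk) ((r i : nat) : int) *: e i.
pose Good := fun B : 'rV[int]_n -> Prop => is_subgroup B /\ subset_of A B.
pose Inv := fun (B : 'rV[int]_n -> Prop) (key : 'I_n.+1 * {set {ffun 'I_sk -> 'I_D}}) =>
  exists (c b : nat -> 'rV[int]_n) (k : 'rV[int]_n -> nat -> int),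
    (forall i, (i < key.1)%N -> B (b i)) /\ (forall i, (i < key.1)%N -> b i *m L = c i) /\
    indep key.1 c /\ (forall x, B x -> x *m L = S key.1 (k x) c) /\
    (forall r, r \in key.2 <-> B (vec r)).
have Kdet : forall B B' : 'rV[int]_n -> Prop, Good B -> Good B' ->
    (forall r, B (vec r) <-> B' (vec r)) -> forall x, K x -> (B x <-> B' x).
  move=> B B' [hB AB] [hB' AB'] hr x Kx.
  have [c xc] := ge x Kx.
  pose r : {ffun 'I_sk -> 'I_D} := [ffun i : 'I_sk => Ordinal (proj1 (resid (c i) d0))].
  pose w := \sum_(i < sk) (c i %/ d)%Z *: e i.
  have Kw : K w.
    apply: (@sgsumo _ K hK sk (fun i => (c i %/ d)%Z *: e i)) => i lt.
    by apply: sgScale => //; apply: Ke.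
  have xe : x = vec r + d *: w.
    rewrite xc /vec /w scaler_sumr -big_split; apply: eq_bigr => i _.
    rewrite ffunE /= scalerA -scalerDl; congr (_ *: _).
    by rewrite {1}(proj2 (resid (c i) d0)) addrC mulrC.
  have Adw := KA w Kw.
  have e1 : vec r = x - d *: w by rewrite xe addrK.
  split => Bx; rewrite xe; apply: sgD => //.
  - by apply/hr; rewrite e1; apply: sgB => //; apply: AB.
  - by apply: AB'.
  - by apply/hr; rewrite e1; apply: sgB => //; apply: AB'.
  - by apply: AB.
pose KT := ('I_n.+1 * {set {ffun 'I_sk -> 'I_D}})%type.
have G0 : Good (fun _ => True) by split => //; split.
have Hex : forall B, Good B -> exists key : KT, Inv B key.
  move=> B [hB AB].
  pose GB := fun y => exists x, B x /\ y = x *m L.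
  have hGB : is_subgroup GB.
    split; first by exists 0; split; [exact: sg0 | rewrite mul0mx].
    move=> _ _ [x [Bx ->]] [y [By ->]]; exists (x - y); split; first exact: sgB.
    by rewrite mulmxBl.
  have [s [c [sn [Gc [ic gc]]]]] := F1 hGB (vac GB).
  have [b hb] : exists b : nat -> 'rV[int]_n, forall i, (i < s)%N -> B (b i) /\ b i *m L = c i.
    apply: (@ex_fun nat _ 0 (fun i bi => (i < s)%N -> B bi /\ bi *m L = c i)) => i.
    case: (ltnP i s) => lt.
      by have [x [Bx cx]] := Gc i lt; exists x => _; split.
    by exists 0.
  have [k hk] : exists k : 'rV[int]_n -> nat -> int, forall x, B x -> x *m L = S s (k x) c.
    apply: (@ex_fun _ _ (fun _ => 0) (fun x kx => B x -> x *m L = S s kx c)) => x.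
    case: (classic (B x)) => Bx.
      by have [kx ex] := gc (x *m L) (ex_intro _ x (conj Bx erefl)); exists kx.
    by exists (fun _ => 0).
  exists (@Ordinal n.+1 s sn, [set r | pb (B (vec r))]).
  exists c, b, k; split; first by move=> i /hb [].
  split; first by move=> i /hb [].
  split => //; split => //.
  by move=> r; rewrite inE; apply: pbP.
have Hrel : forall B B' key, Good B -> Good B' -> Inv B key -> Inv B' key -> equiv_over A B B'.
  move=> B B' key GB GB' [c [b [k [Bb [bc [ic [kc hr]]]]]]] [c' [b' [k' [Bb' [bc' [ic' [kc' hr']]]]]]].
  case: GB GB' => [hB AB] [hB' AB'].
  apply: (iso_build (L := L) (s := key.1) (k := k) (k' := k') hB hB' AB AK _ Bb Bb' bc bc' ic ic' kc kc').
  apply: Kdet; try by split.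
  by move=> r; rewrite -hr hr'.
have [N [C [HC1 HC2]]] := @finite_classes ('rV[int]_n -> Prop) KT Good (equiv_over A) Inv (fun _ => True) G0 Hex Hrel.
exists N, C; split => // B hB AB.
exact: HC2.
Qed.

Unset Implicit Arguments.

Theorem lemma2p3 (P : zmodType) (A : P -> Prop) :
  fin_gen P -> is_subgroup A ->
  exists n : nat, exists C : 'I_n -> (P -> Prop),
    (forall i, is_subgroup (C i) /\ subset_of A (C i)) /\
    (forall B : P -> Prop, is_subgroup B -> subset_of A B ->
       exists i : 'I_n, equiv_over A B (C i)).
Proof.
move=> [n [g hg]] hA.
pose pi := fun x : 'rV[int]_n => \sum_(i < n) g i *~ x 0 i.
have piB : forall x y, pi (x - y) = pi x - pi y.
  move=> x y; rewrite /pi -sumrB; apply: eq_bigr => i _.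
  by rewrite !mxE mulrzBr.
have piD : forall x y, pi (x + y) = pi x + pi y.
  move=> x y; rewrite /pi -big_split; apply: eq_bigr => i _.
  by rewrite !mxE mulrzDr.
have pi0 : pi 0 = 0 by rewrite /pi big1 // => i _; rewrite mxE mulr0z.
have pisurj : forall p, exists x, pi x = p.
  move=> p; have [c pc] := hg p; exists (\row_i c i).
  by rewrite pc /pi; apply: eq_bigr => i _; rewrite mxE.
have [pre hpre] : exists pre : P -> 'rV[int]_n, forall p, pi (pre p) = p.
  exact: (@ex_fun _ _ 0 (fun p x => pi x = p)).
pose At := fun x => A (pi x).
have hAt : is_subgroup At.
  split; first by rewrite /At pi0; exact: sg0.
  by move=> x y; rewrite /At piB; apply: sgB.
have [N [Ct [HC1 HC2]]] := mainV hAt.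
exists N, (fun i p => exists x, Ct i x /\ pi x = p); split.
  move=> i; have [hCi ACi] := HC1 i; split.
    split; first by exists 0; split; [exact: sg0 | exact: pi0].
    move=> _ _ [x [Cx <-]] [y [Cy <-]]; exists (x - y); split; [exact: sgB | exact: piB].
  move=> a Aa; exists (pre a); split => //; apply: ACi; rewrite /At hpre.
  exact: Aa.
move=> B hB AB.
pose Bt := fun x => B (pi x).
have hBt : is_subgroup Bt.
  split; first by rewrite /Bt pi0; exact: sg0.
  by move=> x y; rewrite /Bt piB; apply: sgB.
have ABt : subset_of At Bt by move=> x; apply: AB.
have [i [ft [fB [fD [fI [fS fA]]]]]] := HC2 Bt hBt ABt.
have W : forall x y, Bt x -> Bt y -> pi x = pi y -> pi (ft x) = pi (ft y).
  move=> x y Bx By pxy.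
  have Az : At (x - y) by rewrite /At piB pxy subrr; exact: sg0.
  have -> : ft x = ft (x - y) + ft y.
    by rewrite -fD ?subrK //; apply: sgB.
  by rewrite fA // piD /At piB pxy subrr add0r.
exists i, (fun p => pi (ft (pre p))); split.
  by move=> p Bp; exists (ft (pre p)); split => //; apply: fB; rewrite /Bt hpre.
have Bpre : forall p, B p -> Bt (pre p) by move=> p Bp; rewrite /Bt hpre.
split.
  move=> p q Bp Bq /=.
  rewrite -piD -fD; [|by apply: Bpre..]. have h := W (pre (p + q)) (pre p + pre q). apply: h.
  - by rewrite /Bt hpre; apply: sgD.
  - by apply: sgD => //; apply: Bpre.
  - by rewrite piD !hpre.
split.
  move=> p q Bp Bq /= hpq.
  pose w := ft (pre p) - ft (pre q).
  have Aw : At w by rewrite /At /w piB hpq subrr; exact: sg0.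
  have fw : ft (pre p - pre q) = w.
    rewrite /w; apply/eqP; rewrite eq_sym subr_eq -fD.
    - by rewrite subrK.
    - by apply: sgB => //; apply: Bpre.
    - by apply: Bpre.
  have : pre p - pre q = w.
    apply: fI; [by apply: sgB => //; apply: Bpre | by apply: ABt | by rewrite fw fA].
  move/(congr1 pi); rewrite piB !hpre => h.
  by apply/eqP; rewrite -subr_eq0 h; apply/eqP; move: Aw; rewrite /At /w piB hpq subrr.
split.
  move=> q [y [Cy <-]].
  have [x Bx <-] := fS y Cy.
  exists (pi x) => //.
  by apply: W; rewrite ?hpre // /Bt hpre.
move=> a Aa /=.
by rewrite fA ?hpre // /At hpre.
Qed.
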